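(* In the setting of the context, let $\sigma$ be a faithful permutation of $\{1,\dots,T\}$ and assume the maximum delay is bounded by $\tau$. Then for every $t\in\{1,\dots,T\}$: (a) $|\sigma(t)-t|\le\tau$; (b) $\{\sigma(1),\dots,\sigma(t)\}\setminus\mathcal S_{\sigma(t)}\subset\{\sigma(t)-\tau,\dots,\sigma(t)+\tau\}$.
   Context: Delayed (possibly multi-agent) feedback protocol over rounds $t=1,\dots,T$: at each round the active agent plays a point using the feedback of the timestamps in $\mathcal S_t\subset\{1,\dots,t-1\}$ (the set of timestamps of feedback available to the active agent at time $t$). A permutation $\sigma$ of $\{1,\dots,T\}$ is faithful if $s\in\mathcal S_t$ implies $\sigma^{-1}(s)<\sigma^{-1}(t)$. The maximum delay is bounded by $\tau$ if $\{1,\dots,t-\tau-1\}\subset\mathcal S_t$ for all $t$. *)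

(* Defs.v *)
(* Timestamps {1,...,T} are encoded as 'I_T (timestamp k+1 <-> ordinal k);
   all conditions used (orders, differences) are shift-invariant. *)
From mathcomp Require Import all_boot all_order all_fingroup.
Set Implicit Arguments. Unset Strict Implicit. Unset Printing Implicit Defensive.

(* S t : set of timestamps of feedback available at time t; must lie in {1,...,t-1}. *)
Definition feedback_valid (T : nat) (S : 'I_T -> {set 'I_T}) : Prop :=
  forall t s : 'I_T, s \in S t -> s < t.

Definition faithful_perm (T : nat) (S : 'I_T -> {set 'I_T}) (sigma : {perm 'I_T}) : Prop :=
  forall t s : 'I_T, s \in S t -> (sigma^-1)%g s < (sigma^-1)%g t.

(* {1,...,t-tau-1} subset of S_t, i.e. every s with s + tau < t is in S_t. *)
Definition max_delay_bounded (T : nat) (S : 'I_T -> {set 'I_T}) (tau : nat) : Prop :=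
  forall t s : 'I_T, s + tau < t -> s \in S t.

(* Main.v *)
Require Import Defs.
From mathcomp Require Import all_boot all_order all_fingroup.
From mathcomp Require Import zify.

Lemma pig (T' n m : nat) (f : 'I_T'.+1 -> 'I_T'.+1) :
  injective f -> n <= T'.+1 -> (forall i : 'I_T'.+1, i < n -> f i < m) -> n <= m.
Proof.
move=> finj hn hf.
pose s1 := [seq nat_of_ord (f (inord k : 'I_T'.+1)) | k <- iota 0 n].
have -> : n = size s1 by rewrite size_map size_iota.
rewrite -[m](size_iota 0).
apply: uniq_leq_size.
  rewrite map_inj_in_uniq ?iota_uniq // => k k'.
  rewrite !mem_iota /= !add0n => hk hk' /val_inj /finj eq.
  have := congr1 (@nat_of_ord _) eq; rewrite !inordK //; lia.
move=> x /mapP [k]; rewrite mem_iota add0n /= => hk ->.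
rewrite mem_iota add0n /=; apply: hf; rewrite inordK //; lia.
Qed.

Theorem proposition11 (T : nat) (S : 'I_T -> {set 'I_T}) (sigma : {perm 'I_T}) (tau : nat) :
  feedback_valid S -> faithful_perm S sigma -> max_delay_bounded S tau ->
  forall t : 'I_T,
    (* (a) |sigma(t) - t| <= tau *)
    (sigma t <= t + tau /\ t <= sigma t + tau) /\
    (* (b) {sigma(1),...,sigma(t)} \ S_{sigma(t)} subset {sigma(t)-tau,...,sigma(t)+tau} *)
    (forall s : 'I_T, s \in [set sigma i | i : 'I_T & i <= t] :\: S (sigma t) ->
       sigma t <= s + tau /\ s <= sigma t + tau).
Proof.
move=> _ hF hD t.
case: T S sigma hF hD t => [|T'] S sigma hF hD t; first by case: t.
split; last first.
  move=> s /setDP [/imsetP [i]]; rewrite inE => hi -> hn.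
  split.
    rewrite leqNgt; apply/negP => h; apply/negP: hn; rewrite negbK; exact: hD.
  rewrite leqNgt; apply/negP => h.
  have := hF _ _ (hD _ _ h); rewrite !permK; lia.
split.
  rewrite leqNgt; apply/negP => h.
  have : t.+1 <= t; last by lia.
  apply: (@pig T' t.+1 t ((sigma^-1)%g)); first exact: perm_inj.
    exact: ltn_ord.
  move=> i hi.
  have := hF _ _ (hD (sigma t) i ltac:(lia)); rewrite permK //.
have : t.+1 <= (sigma t + tau).+1; last by lia.
apply: (@pig T' t.+1 _ sigma); first exact: perm_inj.
  exact: ltn_ord.
move=> i hi; rewrite ltnS leqNgt; apply/negP => h.
have := hF _ _ (hD _ _ h); rewrite !permK; lia.
Qed.
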